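(* Let $u_0 \ge 1$ and $r \ge 1$ be integers with $\gcd(u_0,r)=1$. For an integer $n \ge 1$ define $$k_n := \max\left\{0,\ \left\lfloor \frac{n-u_0}{r+1}\right\rfloor + 1\right\}.$$ Let $a \ge 2$ be any given integer. Then for any integers $\alpha \ge a$, $r \ge a$ and $n \ge 2\alpha r$, we have $n - k_n > (\alpha + a - 2) r$.
   Context: $\lfloor x\rfloor$ denotes the largest integer not exceeding $x$. *)

(* Defs.v *)
From mathcomp Require Import all_boot all_order all_algebra.
Set Implicit Arguments. Unset Strict Implicit. Unset Printing Implicit Defensive.
Import Order.TTheory GRing.Theory Num.Theory.
Local Open Scope ring_scope.

(* k_n := max{0, floor((n - u0)/(r+1)) + 1}, over the integers.
   For a positive divisor, intdiv's (m %/ d)%Z is the floor of m/d. *)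
Definition kn (u0 r n : int) : int :=
  Num.max 0 (((n - u0) %/ (r + 1))%Z + 1).

(* Main.v *)
Require Import Defs.
From mathcomp Require Import all_boot all_order all_algebra.
From mathcomp Require Import zify.
Import Order.TTheory GRing.Theory Num.Theory.
Local Open Scope ring_scope.

Theorem lemma3p1 (u0 r a alpha n : int) :
  1 <= u0 -> 1 <= r -> gcdz u0 r = 1 ->
  2 <= a -> a <= alpha -> a <= r -> 1 <= n -> 2 * alpha * r <= n ->
  n - kn u0 r n > (alpha + a - 2) * r.
Proof.
move=> h1 h2 _ h3 h4 h5 h6 h7.
rewrite /kn.
have hr : (0 < r + 1) by lia.
have hd := divz_eq (n - u0) (r + 1).
have hm0 := modz_ge0 (n - u0) (lt0r_neq0 hr).
have hm1 := ltz_pmod (n - u0) hr.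
set q := ((n - u0) %/ (r + 1))%Z in hd *.
set m := ((n - u0) %% (r + 1))%Z in hd hm0 hm1 *.
have H1 : (alpha - a + 2) * (r - 1) >= 0 by apply: mulr_ge0; lia.
have H2 : (alpha - a) * (r - a) >= 0 by apply: mulr_ge0; lia.
rewrite /Num.max; case: ifP => hq.
  suff : (r+1) * ((alpha + a - 2) * r) < (r+1) * (n - (q + 1)) by rewrite ltr_pM2l.
  nia.
move/negbT: hq; rewrite -leNgt => hq. nia.
Qed.
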